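(* Let $k$ be an algebraically closed field. For $i = 1,2$ let $K_i \subseteq G_i$ be reductive groups over $k$, and put $G := G_1 \times G_2$ and $K := K_1 \times K_2$. Let $H \subseteq G$ be a subgroup. Then $H$ is relatively $G$-completely reducible with respect to $K$ if and only if $H$ is relatively $G$-completely reducible with respect to $K_i$ for $i = 1,2$ (where $K_1$ and $K_2$ are regarded as the subgroups $K_1\times\{1\}$ and $\{1\}\times K_2$ of $G$).
   Context: For a cocharacter $\lambda$ of a reductive group $G$, $P_\lambda = \{g \in G \mid \lim_{a\to 0}\lambda(a)g\lambda(a)^{-1} \text{ exists}\}$ and $L_\lambda = \{g \in G \mid \lim_{a\to 0}\lambda(a)g\lambda(a)^{-1} = g\}$. For a reductive subgroup $M$ of $G$, $H$ is relatively $G$-completely reducible with respect to $M$ if for every cocharacter $\lambda$ of $M$ with $H \subseteq P_\lambda$ there is a cocharacter $\mu$ of $M$ with $P_\lambda = P_\mu$ and $H \subseteq L_\mu$ (here $P_\lambda,L_\mu$ are subgroups of $G$). *)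

(* Defs.v *)
(* linear algebraic groups realised concretely as
   Zariski-closed subgroups of GL_n(k), k algebraically closed. *)
From HB Require Import structures.
From mathcomp Require Import all_boot all_order all_algebra all_field.
From mathcomp Require Import mpoly.
Set Implicit Arguments.
Unset Strict Implicit.
Unset Printing Implicit Defensive.
Import GRing.Theory.
Local Open Scope ring_scope.

Section AlgGroups.
Variables (k : closedFieldType) (n : nat).

Definition mx_coords (A : 'M[k]_n) : 'I_(n * n) -> k := fun i => mxvec A 0 i.

Definition GLn (A : 'M[k]_n) : Prop := A \in unitmx.

Definition zariski_closed_in (S T : 'M[k]_n -> Prop) : Prop :=
  exists P : {mpoly k[n * n]} -> Prop,
    forall A, S A <-> (T A /\ forall p, P p -> p.@[mx_coords A] = 0).

Definition is_subgroup (H G : 'M[k]_n -> Prop) : Prop :=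
  [/\ H 1%:M, (forall A B, H A -> H B -> H (A *m B)),
      (forall A, H A -> GLn A /\ H (invmx A)) & (forall A, H A -> G A)].

Definition linear_algebraic_group (G : 'M[k]_n -> Prop) : Prop :=
  is_subgroup G GLn /\ zariski_closed_in G GLn.

Definition closed_subgroup (H G : 'M[k]_n -> Prop) : Prop :=
  is_subgroup H G /\ zariski_closed_in H G.

Definition zariski_connected (S : 'M[k]_n -> Prop) : Prop :=
  forall A B : 'M[k]_n -> Prop,
    zariski_closed_in A S -> zariski_closed_in B S ->
    (forall x, S x <-> A x \/ B x) -> (forall x, ~ (A x /\ B x)) ->
    (forall x, ~ A x) \/ (forall x, ~ B x).

Definition normal_in (U G : 'M[k]_n -> Prop) : Prop :=
  forall g u, G g -> U u -> U (g *m u *m invmx g).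

Definition unipotent (g : 'M[k]_n) : Prop :=
  exists m : nat, iter m (mulmx (g - 1%:M)) 1%:M = 0.

(* reductive: trivial unipotent radical, i.e. every closed connected normal
   unipotent subgroup is trivial *)
Definition reductive (G : 'M[k]_n -> Prop) : Prop :=
  linear_algebraic_group G /\
  forall U, closed_subgroup U G -> zariski_connected U -> normal_in U G ->
    (forall u, U u -> unipotent u) -> forall u, U u -> u = 1%:M.

(* a morphism of varieties G_m -> M_n: entries are Laurent polynomials *)
Definition regular_on_Gm (f : k -> 'M[k]_n) : Prop :=
  exists (N : nat) (q : 'I_n -> 'I_n -> {poly k}),
    forall a, a != 0 -> forall i j, a ^+ N * f a i j = (q i j).[a].

Definition cocharacter (M : 'M[k]_n -> Prop) (lam : k -> 'M[k]_n) : Prop :=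
  [/\ (forall a, a != 0 -> M (lam a)),
      (forall a b, a != 0 -> b != 0 -> lam (a * b) = lam a *m lam b)
    & regular_on_Gm lam].

(* lim_{a -> 0} f a exists in G and equals L: f extends to a morphism
   A^1 -> G with value L at 0 *)
Definition limit_at0 (G : 'M[k]_n -> Prop) (f : k -> 'M[k]_n) (L : 'M[k]_n)
  : Prop :=
  G L /\ exists q : 'I_n -> 'I_n -> {poly k},
    (forall a, a != 0 -> forall i j, f a i j = (q i j).[a]) /\
    (forall i j, L i j = (q i j).[0]).

Definition conj_curve (lam : k -> 'M[k]_n) (g : 'M[k]_n) : k -> 'M[k]_n :=
  fun a => lam a *m g *m invmx (lam a).

Definition Pl (G : 'M[k]_n -> Prop) (lam : k -> 'M[k]_n) (g : 'M[k]_n) : Prop :=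
  G g /\ exists L, limit_at0 G (conj_curve lam g) L.

Definition Ll (G : 'M[k]_n -> Prop) (lam : k -> 'M[k]_n) (g : 'M[k]_n) : Prop :=
  G g /\ limit_at0 G (conj_curve lam g) g.

Definition rel_Gcr (G M H : 'M[k]_n -> Prop) : Prop :=
  forall lam, cocharacter M lam -> (forall h, H h -> Pl G lam h) ->
    exists mu, [/\ cocharacter M mu, (forall g, Pl G lam g <-> Pl G mu g)
                 & (forall h, H h -> Ll G mu h)].

End AlgGroups.

(* direct product G1 x G2 embedded block-diagonally in GL_(n1+n2) *)
Definition prod_set (k : closedFieldType) (n1 n2 : nat)
  (S1 : 'M[k]_n1 -> Prop) (S2 : 'M[k]_n2 -> Prop) : 'M[k]_(n1 + n2) -> Prop :=
  fun g => exists g1 g2, [/\ S1 g1, S2 g2 & g = block_mx g1 0 0 g2].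

Definition trivial_group (k : closedFieldType) (n : nat) : 'M[k]_n -> Prop :=
  fun g => g = 1%:M.

(* Main.v *)
Require Import Defs.
From mathcomp Require Import all_boot all_order all_algebra all_field.
From mathcomp Require Import mpoly.
Set Implicit Arguments.
Unset Strict Implicit.
Unset Printing Implicit Defensive.
Import GRing.Theory.
Local Open Scope ring_scope.

Section Generic.
Variables (k : closedFieldType) (n : nat).

Lemma limit_ext (G : 'M[k]_n -> Prop) f f' L :
  (forall a, a != 0 -> f a = f' a) -> limit_at0 G f L <-> limit_at0 G f' L.
Proof.
move=> E; split; case=> GL [q [Hq HL]]; split=> //; exists q; split=> //.
- by move=> a a0 i j; rewrite -E // Hq.
- by move=> a a0 i j; rewrite E // Hq.
Qed.

Lemma Pl_ext (G : 'M[k]_n -> Prop) lam lam' g :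
  (forall a, a != 0 -> lam a = lam' a) -> Pl G lam g <-> Pl G lam' g.
Proof.
move=> E.
have E' : forall a, a != 0 -> conj_curve lam g a = conj_curve lam' g a.
  by move=> a a0; rewrite /conj_curve E.
split; case=> Gg [L HL]; split=> //; exists L.
- exact: (limit_ext _ _ E').1.
- exact: (limit_ext _ _ E').2.
Qed.

Lemma lim_const (G : 'M[k]_n -> Prop) g : G g -> limit_at0 G (fun _ => g) g.
Proof.
move=> Gg; split=> //; exists (fun i j => (g i j)%:P); split.
- by move=> a _ i j; rewrite hornerC.
- by move=> i j; rewrite hornerC.
Qed.

Lemma conj1 (g : 'M[k]_n) : forall a : k, conj_curve (fun _ => 1%:M) g a = g.
Proof. by move=> a; rewrite /conj_curve mul1mx invmx1 mulmx1. Qed.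

Lemma Pl_one (G : 'M[k]_n -> Prop) m g :
  (forall a, a != 0 -> m a = 1%:M) -> Pl G m g <-> G g.
Proof.
move=> E; rewrite (Pl_ext _ _ E); split; first by case.
move=> Gg; split=> //; exists g.
apply/(limit_ext _ _ (f' := fun _ => g)); first by move=> a _; rewrite conj1.
exact: lim_const.
Qed.

Lemma Ll_one (G : 'M[k]_n -> Prop) m g :
  (forall a, a != 0 -> m a = 1%:M) -> Ll G m g <-> G g.
Proof.
move=> E.
have E' : forall a, a != 0 -> conj_curve m g a = g.
  by move=> a a0; rewrite /conj_curve E // mul1mx invmx1 mulmx1.
split; first by case.
move=> Gg; split=> //.
apply/(limit_ext _ _ (f' := fun _ => g)) => //; exact: lim_const.
Qed.

Lemma Pl_at1 (G : 'M[k]_n -> Prop) m :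
  (forall a, a != 0 -> m a \in unitmx) -> G 1%:M -> Pl G m 1%:M.
Proof.
move=> U G1; split=> //; exists 1%:M.
apply/(limit_ext _ _ (f' := fun _ => 1%:M)); last exact: lim_const.
by move=> a a0; rewrite /conj_curve mulmx1 mulmxV // U.
Qed.

Lemma coch_unit (M : 'M[k]_n -> Prop) m :
  cocharacter M m -> (forall g, M g -> g \in unitmx) ->
  forall a, a != 0 -> m a \in unitmx.
Proof. by case=> Mm _ _ U a a0; apply: U; apply: Mm. Qed.

Lemma coch_const (M : 'M[k]_n -> Prop) :
  M 1%:M -> cocharacter M (fun _ => 1%:M).
Proof.
move=> M1; split => //.
- by move=> *; rewrite mulmx1.
- exists 0%N, (fun i j => ((1%:M : 'M[k]_n) i j)%:P) => a _ i j.
  by rewrite expr0 mul1r hornerC.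
Qed.

End Generic.

Section Prod.
Variables (k : closedFieldType) (n1 n2 : nat).
Local Notation D x y := (@block_mx k n1 n2 n1 n2 x 0 0 y).

Lemma D_inj x y x' y' : D x y = D x' y' -> x = x' /\ y = y'.
Proof.
move=> E; split.
- by have := congr1 ulsubmx E; rewrite !block_mxKul.
- by have := congr1 drsubmx E; rewrite !block_mxKdr.
Qed.

Lemma DM x y x' y' : D x y *m D x' y' = D (x *m x') (y *m y').
Proof. by rewrite mulmx_block !mulmx0 !mul0mx !addr0 !add0r. Qed.

Lemma D1 : (1%:M : 'M[k]_(n1 + n2)) = D 1%:M 1%:M.
Proof. by rewrite scalar_mx_block. Qed.

Lemma Dunit x y : x \in unitmx -> y \in unitmx -> D x y \in unitmx.
Proof. by rewrite !unitmxE det_ublock => ux uy; rewrite unitrM ux uy. Qed.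

Lemma Dinv x y : x \in unitmx -> y \in unitmx ->
  invmx (D x y) = D (invmx x) (invmx y).
Proof.
move=> ux uy; have U := Dunit ux uy.
by rewrite -[RHS](mulKmx U) DM !mulmxV // -D1 mulmx1.
Qed.

Lemma conjD x y g1 g2 : x \in unitmx -> y \in unitmx ->
  D x y *m D g1 g2 *m invmx (D x y) =
  D (x *m g1 *m invmx x) (y *m g2 *m invmx y).
Proof. by move=> ux uy; rewrite Dinv // !DM. Qed.

Lemma prodD (S1 : 'M[k]_n1 -> Prop) (S2 : 'M[k]_n2 -> Prop) g1 g2 :
  prod_set S1 S2 (D g1 g2) <-> S1 g1 /\ S2 g2.
Proof.
split.
- by case=> h1 [h2 [a b E]]; case: (D_inj E) => -> ->.
- by case=> a b; exists g1, g2; split.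
Qed.

Lemma limD (G1 : 'M[k]_n1 -> Prop) (G2 : 'M[k]_n2 -> Prop) f f1 f2 L1 L2 :
  (forall a, a != 0 -> f a = D (f1 a) (f2 a)) ->
  limit_at0 (prod_set G1 G2) f (D L1 L2) <->
  limit_at0 G1 f1 L1 /\ limit_at0 G2 f2 L2.
Proof.
move=> Ef; split.
- case=> /prodD [g1 g2] [q [Hq HL]].
  split; split=> //.
  + exists (fun i j => q (lshift n2 i) (lshift n2 j)); split.
    * by move=> a a0 i j; rewrite -Hq // Ef // block_mxEul.
    * by move=> i j; rewrite -HL block_mxEul.
  + exists (fun i j => q (rshift n1 i) (rshift n1 j)); split.
    * by move=> a a0 i j; rewrite -Hq // Ef // block_mxEdr.
    * by move=> i j; rewrite -HL block_mxEdr.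
- case=> [[g1 [q1 [H1 L1e]]] [g2 [q2 [H2 L2e]]]].
  split; first by apply/prodD.
  pose Q : 'M[{poly k}]_(n1 + n2) :=
    block_mx (\matrix_(i, j) q1 i j) 0 0 (\matrix_(i, j) q2 i j).
  exists (fun i j => Q i j); split.
  + move=> a a0 i j.
    have -> : f a = map_mx (fun p => p.[a]) Q.
      rewrite Ef // map_block_mx; congr block_mx; apply/matrixP=> i' j';
        by rewrite !mxE ?horner0 // ?H1 ?H2.
    by rewrite mxE.
  + move=> i j.
    have -> : D L1 L2 = map_mx (fun p => p.[0]) Q.
      rewrite map_block_mx; congr block_mx; apply/matrixP=> i' j';
        by rewrite !mxE ?horner0 // ?L1e ?L2e.
    by rewrite mxE.
Qed.

Lemma coch_split (K1 : 'M[k]_n1 -> Prop) (K2 : 'M[k]_n2 -> Prop) lam :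
  cocharacter (prod_set K1 K2) lam ->
  exists m1 m2, [/\ cocharacter K1 m1, cocharacter K2 m2 &
     forall a, a != 0 -> lam a = D (m1 a) (m2 a)].
Proof.
case=> Mem Mul [N [q Hq]].
exists (fun a => ulsubmx (lam a)), (fun a => drsubmx (lam a)); split.
- split.
  + by move=> a a0; case: (Mem a a0) => g1 [g2 [? _ ->]]; rewrite block_mxKul.
  + move=> a b a0 b0; rewrite Mul //.
    case: (Mem a a0) => x1 [x2 [_ _ ->]]; case: (Mem b b0) => y1 [y2 [_ _ ->]].
    by rewrite DM !block_mxKul.
  + exists N, (fun i j => q (lshift n2 i) (lshift n2 j)) => a a0 i j.
    rewrite -Hq //; case: (Mem a a0) => x1 [x2 [_ _ ->]].
    by rewrite block_mxKul block_mxEul.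
- split.
  + by move=> a a0; case: (Mem a a0) => g1 [g2 [_ ? ->]]; rewrite block_mxKdr.
  + move=> a b a0 b0; rewrite Mul //.
    case: (Mem a a0) => x1 [x2 [_ _ ->]]; case: (Mem b b0) => y1 [y2 [_ _ ->]].
    by rewrite DM !block_mxKdr.
  + exists N, (fun i j => q (rshift n1 i) (rshift n1 j)) => a a0 i j.
    rewrite -Hq //; case: (Mem a a0) => x1 [x2 [_ _ ->]].
    by rewrite block_mxKdr block_mxEdr.
- move=> a a0; case: (Mem a a0) => g1 [g2 [_ _ ->]].
  by rewrite block_mxKul block_mxKdr.
Qed.

Lemma coch_join (K1 : 'M[k]_n1 -> Prop) (K2 : 'M[k]_n2 -> Prop) m1 m2 :
  cocharacter K1 m1 -> cocharacter K2 m2 ->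
  cocharacter (prod_set K1 K2) (fun a => D (m1 a) (m2 a)).
Proof.
case=> M1 X1 [N1 [q1 H1]] [M2 X2 [N2 [q2 H2]]]; split.
- by move=> a a0; apply/prodD; split; [apply: M1 | apply: M2].
- by move=> a b a0 b0; rewrite X1 // X2 // DM.
- exists (N1 + N2)%N.
  pose Q : 'M[{poly k}]_(n1 + n2) :=
    block_mx (\matrix_(i, j) ('X^N2 * q1 i j)) 0 0
             (\matrix_(i, j) ('X^N1 * q2 i j)).
  exists (fun i j => Q i j) => a a0 i j.
  have -> : a ^+ (N1 + N2) * D (m1 a) (m2 a) i j =
            (a ^+ (N1 + N2) *: D (m1 a) (m2 a)) i j by rewrite [RHS]mxE.
  have -> : a ^+ (N1 + N2) *: D (m1 a) (m2 a) = map_mx (fun p => p.[a]) Q.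
    rewrite scale_block_mx !scaler0 map_block_mx; congr block_mx;
      apply/matrixP=> i' j'; rewrite !mxE ?horner0 //.
    + by rewrite hornerM hornerXn -H1 // exprD [a ^+ N1 * _]mulrC mulrA.
    + by rewrite hornerM hornerXn -H2 // exprD mulrA.
  by rewrite mxE.
Qed.

Lemma PlD (G1 : 'M[k]_n1 -> Prop) (G2 : 'M[k]_n2 -> Prop) lam m1 m2 g1 g2 :
  (forall a, a != 0 -> lam a = D (m1 a) (m2 a)) ->
  (forall a, a != 0 -> m1 a \in unitmx /\ m2 a \in unitmx) ->
  Pl (prod_set G1 G2) lam (D g1 g2) <-> Pl G1 m1 g1 /\ Pl G2 m2 g2.
Proof.
move=> E U.
have C : forall a, a != 0 -> conj_curve lam (D g1 g2) a =
    D (conj_curve m1 g1 a) (conj_curve m2 g2 a).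
  by move=> a a0; case: (U a a0) => u1 u2; rewrite /conj_curve E // conjD.
split.
- case=> /prodD [G1g G2g] [L HL].
  have [L1 [L2 [_ _ EL]]] : prod_set G1 G2 L by case: HL.
  rewrite EL in HL; case: ((limD _ _ _ _ C).1 HL) => h1 h2.
  by split; split=> //; [exists L1 | exists L2].
- case=> [[G1g [L1 H1]] [G2g [L2 H2]]]; split; first by apply/prodD.
  by exists (D L1 L2); apply/(limD _ _ _ _ C).
Qed.

Lemma LlD (G1 : 'M[k]_n1 -> Prop) (G2 : 'M[k]_n2 -> Prop) lam m1 m2 g1 g2 :
  (forall a, a != 0 -> lam a = D (m1 a) (m2 a)) ->
  (forall a, a != 0 -> m1 a \in unitmx /\ m2 a \in unitmx) ->
  Ll (prod_set G1 G2) lam (D g1 g2) <-> Ll G1 m1 g1 /\ Ll G2 m2 g2.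
Proof.
move=> E U.
have C : forall a, a != 0 -> conj_curve lam (D g1 g2) a =
    D (conj_curve m1 g1 a) (conj_curve m2 g2 a).
  by move=> a a0; case: (U a a0) => u1 u2; rewrite /conj_curve E // conjD.
split.
- case=> /prodD [G1g G2g] /(limD _ _ _ _ C) [h1 h2]; by split; split.
- case=> [[G1g H1] [G2g H2]]; split; first by apply/prodD.
  by apply/(limD _ _ _ _ C).
Qed.

Lemma iff_on_prod (G1 : 'M[k]_n1 -> Prop) (G2 : 'M[k]_n2 -> Prop)
  (P Q : 'M[k]_(n1 + n2) -> Prop) :
  (forall g1 g2, P (D g1 g2) <-> Q (D g1 g2)) ->
  (forall g, P g -> prod_set G1 G2 g) -> (forall g, Q g -> prod_set G1 G2 g) ->
  forall g, P g <-> Q g.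
Proof.
move=> E HP HQ g; split=> X; [case: (HP g X) | case: (HQ g X)] =>
  g1 [g2 [_ _ Eg]]; move: X; rewrite Eg; apply E.
Qed.

End Prod.

Lemma triv_unit (k : closedFieldType) (n : nat) (g : 'M[k]_n) :
  trivial_group g -> g \in unitmx.
Proof. by move=> ->; exact: unitmx1. Qed.

Theorem corollary4p6 (k : closedFieldType) (n1 n2 : nat)
  (G1 K1 : 'M[k]_n1 -> Prop) (G2 K2 : 'M[k]_n2 -> Prop)
  (H : 'M[k]_(n1 + n2) -> Prop) :
  reductive G1 -> reductive G2 -> reductive K1 -> reductive K2 ->
  closed_subgroup K1 G1 -> closed_subgroup K2 G2 ->
  is_subgroup H (prod_set G1 G2) ->
  (rel_Gcr (prod_set G1 G2) (prod_set K1 K2) H <->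
   (rel_Gcr (prod_set G1 G2) (prod_set K1 (@trivial_group k n2)) H /\
    rel_Gcr (prod_set G1 G2) (prod_set (@trivial_group k n1) K2) H)).
Proof.
move=> _ _ _ _ [[K11 _ K1inv K1G] _] [[K21 _ K2inv K2G] _] [_ _ _ HG].
have U1 : forall g, K1 g -> g \in unitmx by move=> g /K1inv [].
have U2 : forall g, K2 g -> g \in unitmx by move=> g /K2inv [].
have G11 : G1 1%:M := K1G _ K11.
have G21 : G2 1%:M := K2G _ K21.
have u1 : forall a : k, a != 0 -> (1%:M : 'M[k]_n1) \in unitmx
  by move=> *; exact: unitmx1.
have u2 : forall a : k, a != 0 -> (1%:M : 'M[k]_n2) \in unitmx
  by move=> *; exact: unitmx1.
split.
- move=> R; split.
  + move=> lam clam HP.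
    have [l1 [l2 [c1 c2 E]]] := coch_split clam.
    have l2one : forall a, a != 0 -> l2 a = 1%:M by case: c2.
    have E' : forall a, a != 0 -> lam a = block_mx (l1 a) 0 0 1%:M
      by move=> a a0; rewrite E // l2one.
    have ul1 := coch_unit c1 U1.
    have cl' := coch_join c1 (coch_const K21).
    have HP' : forall h, H h -> Pl (prod_set G1 G2)
        (fun a => block_mx (l1 a) 0 0 1%:M) h.
      by move=> h Hh; apply/(Pl_ext _ _ E')/HP.
    have [mu [cmu EPl HLl]] := R _ cl' HP'.
    have [m1 [m2 [cm1 cm2 Em]]] := coch_split cmu.
    have um1 := coch_unit cm1 U1; have um2 := coch_unit cm2 U2.
    exists (fun a => block_mx (m1 a) 0 0 1%:M); split.
    * exact: coch_join cm1 (coch_const (erefl _)).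
    * have key : forall g1, Pl G1 l1 g1 <-> Pl G1 m1 g1.
        move=> g1; have := EPl (block_mx g1 0 0 1%:M).
        have A1 := @PlD k n1 n2 G1 G2 _ l1 (fun _ => 1%:M) g1 1%:M
          (fun a _ => erefl) (fun a a0 => conj (ul1 a a0) (u2 a a0)).
        have A2 := @PlD k n1 n2 G1 G2 _ m1 m2 g1 1%:M
          Em (fun a a0 => conj (um1 a a0) (um2 a a0)).
        have B1 : Pl G2 (fun _ => 1%:M) 1%:M := Pl_at1 u2 G21.
        have B2 : Pl G2 m2 1%:M := Pl_at1 um2 G21.
        tauto.
      apply: (@iff_on_prod k n1 n2 G1 G2); [move=> g1 g2| by move=> ? []| by move=> ? []].
      have A1 := @PlD k n1 n2 G1 G2 _ l1 (fun _ => 1%:M) g1 g2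
          E' (fun a a0 => conj (ul1 a a0) (u2 a a0)).
      have A2 := @PlD k n1 n2 G1 G2 _ m1 (fun _ => 1%:M) g1 g2
          (fun a _ => erefl) (fun a a0 => conj (um1 a a0) (u2 a a0)).
      have := key g1; tauto.
    * move=> h Hh; case: (HG h Hh) => h1 [h2 [_ G2h Eh]]; rewrite Eh.
      have := HLl h Hh; rewrite Eh.
      move/(LlD _ _ _ _ Em (fun a a0 => conj (um1 a a0) (um2 a a0))) => [L1 _].
      apply/(LlD _ _ _ _ (fun a _ => erefl) (fun a a0 => conj (um1 a a0) (u2 a a0))).
      by split => //; apply/(Ll_one _ _ (fun _ _ => erefl)).
  + move=> lam clam HP.
    have [l1 [l2 [c1 c2 E]]] := coch_split clam.
    have l1one : forall a, a != 0 -> l1 a = 1%:M by case: c1.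
    have E' : forall a, a != 0 -> lam a = block_mx 1%:M 0 0 (l2 a)
      by move=> a a0; rewrite E // l1one.
    have ul2 := coch_unit c2 U2.
    have cl' := coch_join (coch_const K11) c2.
    have HP' : forall h, H h -> Pl (prod_set G1 G2)
        (fun a => block_mx 1%:M 0 0 (l2 a)) h.
      by move=> h Hh; apply/(Pl_ext _ _ E')/HP.
    have [mu [cmu EPl HLl]] := R _ cl' HP'.
    have [m1 [m2 [cm1 cm2 Em]]] := coch_split cmu.
    have um1 := coch_unit cm1 U1; have um2 := coch_unit cm2 U2.
    exists (fun a => block_mx 1%:M 0 0 (m2 a)); split.
    * exact: coch_join (coch_const (erefl _)) cm2.
    * have key : forall g2, Pl G2 l2 g2 <-> Pl G2 m2 g2.
        move=> g2; have := EPl (block_mx 1%:M 0 0 g2).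
        have A1 := @PlD k n1 n2 G1 G2 _ (fun _ => 1%:M) l2 1%:M g2
          (fun a _ => erefl) (fun a a0 => conj (u1 a a0) (ul2 a a0)).
        have A2 := @PlD k n1 n2 G1 G2 _ m1 m2 1%:M g2
          Em (fun a a0 => conj (um1 a a0) (um2 a a0)).
        have B1 : Pl G1 (fun _ => 1%:M) 1%:M := Pl_at1 u1 G11.
        have B2 : Pl G1 m1 1%:M := Pl_at1 um1 G11.
        tauto.
      apply: (@iff_on_prod k n1 n2 G1 G2); [move=> g1 g2| by move=> ? []| by move=> ? []].
      have A1 := @PlD k n1 n2 G1 G2 _ (fun _ => 1%:M) l2 g1 g2
          E' (fun a a0 => conj (u1 a a0) (ul2 a a0)).
      have A2 := @PlD k n1 n2 G1 G2 _ (fun _ => 1%:M) m2 g1 g2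
          (fun a _ => erefl) (fun a a0 => conj (u1 a a0) (um2 a a0)).
      have := key g2; tauto.
    * move=> h Hh; case: (HG h Hh) => h1 [h2 [G1h _ Eh]]; rewrite Eh.
      have := HLl h Hh; rewrite Eh.
      move/(LlD _ _ _ _ Em (fun a a0 => conj (um1 a a0) (um2 a a0))) => [_ L2].
      apply/(LlD _ _ _ _ (fun a _ => erefl) (fun a a0 => conj (u1 a a0) (um2 a a0))).
      by split => //; apply/(Ll_one _ _ (fun _ _ => erefl)).
- case=> R1 R2 lam clam HP.
  have [l1 [l2 [c1 c2 E]]] := coch_split clam.
  have ul1 := coch_unit c1 U1; have ul2 := coch_unit c2 U2.
  have UE : forall a, a != 0 -> l1 a \in unitmx /\ l2 a \in unitmx
    by move=> a a0; split; [exact: ul1 | exact: ul2].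
  have cA : cocharacter (prod_set K1 (@trivial_group k n2)) (fun a => block_mx (l1 a) 0 0 1%:M) := coch_join c1 (coch_const (erefl (1%:M : 'M[k]_n2))).
  have HPA : forall h, H h -> Pl (prod_set G1 G2)
      (fun a => block_mx (l1 a) 0 0 1%:M) h.
    move=> h Hh; have := HP h Hh; case: (HG h Hh) => h1 [h2 [_ G2h ->]].
    move/(PlD _ _ _ _ E UE) => [P1 _].
    apply/(PlD _ _ _ _ (fun a _ => erefl) (fun a a0 => conj (ul1 a a0) (u2 a a0))).
    by split => //; apply/(Pl_one _ _ (fun _ _ => erefl)).
  have [mu1 [cmu1 EP1 HL1]] := R1 _ cA HPA.
  have [m1 [e1 [cm1 ce1 Em1]]] := coch_split cmu1.
  have um1 := coch_unit cm1 U1; have ue1 := coch_unit ce1 (@triv_unit _ _).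
  have key1 : forall g1, Pl G1 l1 g1 <-> Pl G1 m1 g1.
    move=> g1; have := EP1 (block_mx g1 0 0 1%:M).
    have A1 := @PlD k n1 n2 G1 G2 _ l1 (fun _ => 1%:M) g1 1%:M
      (fun a _ => erefl) (fun a a0 => conj (ul1 a a0) (u2 a a0)).
    have A2 := @PlD k n1 n2 G1 G2 _ m1 e1 g1 1%:M
      Em1 (fun a a0 => conj (um1 a a0) (ue1 a a0)).
    have B1 : Pl G2 (fun _ => 1%:M) 1%:M := Pl_at1 u2 G21.
    have B2 : Pl G2 e1 1%:M := Pl_at1 ue1 G21.
    tauto.
  have LL1 : forall h1 h2, H (block_mx h1 0 0 h2) -> Ll G1 m1 h1.
    move=> h1 h2 Hh; have := HL1 _ Hh.
    by move/(LlD _ _ _ _ Em1 (fun a a0 => conj (um1 a a0) (ue1 a a0))) => [].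
  have cB : cocharacter (prod_set (@trivial_group k n1) K2) (fun a => block_mx 1%:M 0 0 (l2 a)) := coch_join (coch_const (erefl (1%:M : 'M[k]_n1))) c2.
  have HPB : forall h, H h -> Pl (prod_set G1 G2)
      (fun a => block_mx 1%:M 0 0 (l2 a)) h.
    move=> h Hh; have := HP h Hh; case: (HG h Hh) => h1 [h2 [G1h _ ->]].
    move/(PlD _ _ _ _ E UE) => [_ P2].
    apply/(PlD _ _ _ _ (fun a _ => erefl) (fun a a0 => conj (u1 a a0) (ul2 a a0))).
    by split => //; apply/(Pl_one _ _ (fun _ _ => erefl)).
  have [mu2 [cmu2 EP2 HL2]] := R2 _ cB HPB.
  have [e2 [m2 [ce2 cm2 Em2]]] := coch_split cmu2.
  have um2 := coch_unit cm2 U2; have ue2 := coch_unit ce2 (@triv_unit _ _).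
  have key2 : forall g2, Pl G2 l2 g2 <-> Pl G2 m2 g2.
    move=> g2; have := EP2 (block_mx 1%:M 0 0 g2).
    have A1 := @PlD k n1 n2 G1 G2 _ (fun _ => 1%:M) l2 1%:M g2
      (fun a _ => erefl) (fun a a0 => conj (u1 a a0) (ul2 a a0)).
    have A2 := @PlD k n1 n2 G1 G2 _ e2 m2 1%:M g2
      Em2 (fun a a0 => conj (ue2 a a0) (um2 a a0)).
    have B1 : Pl G1 (fun _ => 1%:M) 1%:M := Pl_at1 u1 G11.
    have B2 : Pl G1 e2 1%:M := Pl_at1 ue2 G11.
    tauto.
  have LL2 : forall h1 h2, H (block_mx h1 0 0 h2) -> Ll G2 m2 h2.
    move=> h1 h2 Hh; have := HL2 _ Hh.
    by move/(LlD _ _ _ _ Em2 (fun a a0 => conj (ue2 a a0) (um2 a a0))) => [].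
  have UM : forall a, a != 0 -> m1 a \in unitmx /\ m2 a \in unitmx
    by move=> a a0; split; [exact: um1 | exact: um2].
  exists (fun a => block_mx (m1 a) 0 0 (m2 a)); split.
  + exact: coch_join cm1 cm2.
  + apply: (@iff_on_prod k n1 n2 G1 G2); [move=> g1 g2| by move=> ? []| by move=> ? []].
    have A1 := @PlD k n1 n2 G1 G2 _ l1 l2 g1 g2 E UE.
    have A2 := @PlD k n1 n2 G1 G2 _ m1 m2 g1 g2 (fun a _ => erefl) UM.
    have := key1 g1; have := key2 g2; tauto.
  + move=> h Hh; case: (HG h Hh) => h1 [h2 [_ _ Eh]]; rewrite Eh in Hh *.
    apply/(LlD _ _ _ _ (fun a _ => erefl) UM); split; [exact: LL1 Hh | exact: LL2 Hh].
Qed.
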